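(* Let $\mathcal{G}=(\mathcal{V},\mathcal{E})$ be connected, $c\in\mathbb{R}^n$, $\bar c=\frac1n\sum_ic_i$, $R_0=\tfrac12\|c-\bar c\mathbf{1}\|^2$, and let $\{\lambda^t\}_{t\ge0}$ be positive stepsizes. Set $x^0=c$ and for $t\ge0$ choose $e=(i,j)\in\mathcal{E}$ uniformly at random (independently across iterations); if $x_i^t<x_j^t$ set $x_i^{t+1}=x_i^t+\lambda^t$, $x_j^{t+1}=x_j^t-\lambda^t$; otherwise set $x_i^{t+1}=x_i^t-\lambda^t$, $x_j^{t+1}=x_j^t+\lambda^t$; all other coordinates are unchanged. Let $L^t=\frac1m\sum_{(i,j)\in\mathcal{E}}|x_i^t-x_j^t|$, $\alpha^k=\sum_{t=0}^k\lambda^t$, $\beta^k=\sum_{t=0}^k(\lambda^t)^2$. Then for all $k\ge1$ $$\min_{t=0,\dots,k}\mathbb{E}[L^t]\le\sum_{t=0}^k\frac{\lambda^t}{\alpha^k}\mathbb{E}[L^t]\le U^k:=\frac{R_0}{\alpha^k}+\frac{\beta^k}{\alpha^k}.$$ Moreover: (i) if $\lambda^t=\lambda^0>0$ for all $t$, then $U^k=\frac{R_0}{\lambda^0(k+1)}+\lambda^0$; (ii) for fixed $k$ and any $R>0$, over all positive $(\lambda^0,\dots,\lambda^k)$ the quantity $\frac{R+\beta^k}{\alpha^k}$ is minimized by $\lambda^t=\sqrt{R/(k+1)}$ for all $t\le k$, with minimum value $2\sqrt{R/(k+1)}$; in particular if $R\ge R_0$ this choice gives $U^k\le2\sqrt{R/(k+1)}$;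 (iii) if $\lambda^t=a/\sqrt{t+1}$ with $a>0$, then $$U^k\le\frac{R_0+a^2(\log(k+3/2)+\log 2)}{2a(\sqrt{k+2}-1)}.$$
   Context: $\mathcal{G}$ is an undirected graph with vertices $\mathcal{V}=\{1,\dots,n\}$ and $m=|\mathcal{E}|$ edges, each edge $e=(i,j)$ having an arbitrary but fixed orientation; $\mathbf{1}$ is the all-ones vector in $\mathbb{R}^n$ and $\|\cdot\|$ the Euclidean norm. *)

(* Defs.v *)
From Stdlib Require Import Reals Lra Lia List.
Import ListNotations.
Open Scope R_scope.

(* An edge (i,j) with a fixed orientation; vertices are 0..n-1. *)
Definition edge := (nat * nat)%type.

(* Real-valued vectors indexed by vertices (only coordinates < n matter). *)
Definition vec := nat -> R.

Definition sumR (l : list R) : R := fold_right Rplus 0 l.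

Definition simple_graph (n : nat) (E : list edge) : Prop :=
  NoDup E /\
  (forall i j, In (i, j) E -> (i < n)%nat /\ (j < n)%nat /\ i <> j) /\
  (forall i j, In (i, j) E -> ~ In (j, i) E).

Inductive reach (E : list edge) : nat -> nat -> Prop :=
| reach_refl : forall i, reach E i i
| reach_fwd : forall i j k, In (i, j) E -> reach E j k -> reach E i k
| reach_bwd : forall i j k, In (j, i) E -> reach E j k -> reach E i k.

Definition connected (n : nat) (E : list edge) : Prop :=
  forall i j, (i < n)%nat -> (j < n)%nat -> reach E i j.

Definition mean (n : nat) (c : vec) : R :=
  sumR (map c (seq 0 n)) / INR n.
Definition Rzero (n : nat) (c : vec) : R :=
  / 2 * sumR (map (fun i => (c i - mean n c) ^ 2) (seq 0 n)).

Definition step (lam : R) (x : vec) (e : edge) : vec :=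
  let (i, j) := e in
  fun v =>
    if Nat.eqb v i then
      (if Rlt_dec (x i) (x j) then x i + lam else x i - lam)
    else if Nat.eqb v j then
      (if Rlt_dec (x i) (x j) then x j - lam else x j + lam)
    else x v.

Fixpoint run (lam : nat -> R) (t : nat) (x : vec) (s : list edge) : vec :=
  match s with
  | [] => x
  | e :: s' => run lam (S t) (step (lam t) x e) s'
  end.

(* x^t as a function of the first t edge choices (x^0 = c). *)
Definition iterate (lam : nat -> R) (c : vec) (s : list edge) : vec :=
  run lam 0 c s.

(* All sequences of length t of edges from E (the sample space for t draws). *)
Fixpoint seqs (E : list edge) (t : nat) : list (list edge) :=
  match t with
  | O => [ [] ]
  | S t' => flat_map (fun e => map (cons e) (seqs E t')) E
  end.

Definition Lfun (E : list edge) (x : vec) : R :=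
  / INR (length E) * sumR (map (fun e => Rabs (x (fst e) - x (snd e))) E).

(* E[L^t] with i.i.d. uniform edge choices: average over all m^t sequences. *)
Definition ExpL (E : list edge) (lam : nat -> R) (c : vec) (t : nat) : R :=
  (/ INR (length E)) ^ t *
  sumR (map (fun s => Lfun E (iterate lam c s)) (seqs E t)).

Definition alpha (lam : nat -> R) (k : nat) : R := sum_f_R0 lam k.
Definition beta (lam : nat -> R) (k : nat) : R := sum_f_R0 (fun t => lam t ^ 2) k.

Fixpoint min_upto (f : nat -> R) (k : nat) : R :=
  match k with
  | O => f O
  | S k' => Rmin (min_upto f k') (f k)
  end.

Definition Ubound (R0v : R) (lam : nat -> R) (k : nat) : R :=
  R0v / alpha lam k + beta lam k / alpha lam k.

(* Main.v *)
Require Import Defs.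
From Stdlib Require Import Reals List Lra Lia.
Import ListNotations.
Open Scope R_scope.

Lemma sumR_app l1 l2 : sumR (l1 ++ l2) = sumR l1 + sumR l2.
Proof. induction l1; simpl; [ring| rewrite IHl1; ring]. Qed.

Lemma sumR_flat_map {A B} (h : B -> R) (f : A -> list B) l :
  sumR (map h (flat_map f l)) = sumR (map (fun a => sumR (map h (f a))) l).
Proof. induction l; simpl; auto. rewrite map_app, sumR_app, IHl. auto. Qed.

Lemma sumR_ext_in {A} (f g : A -> R) l :
  (forall a, In a l -> f a = g a) -> sumR (map f l) = sumR (map g l).
Proof. intros H. rewrite (map_ext_in f g l H). auto. Qed.

Lemma sumR_plus {A} (f g : A -> R) l :
  sumR (map (fun a => f a + g a) l) = sumR (map f l) + sumR (map g l).
Proof. induction l; simpl; [ring| rewrite IHl; ring]. Qed.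

Lemma sumR_scal {A} (f : A -> R) a l :
  sumR (map (fun x => a * f x) l) = a * sumR (map f l).
Proof. induction l; simpl; [ring| rewrite IHl; ring]. Qed.

Lemma sumR_const {A} a (l : list A) :
  sumR (map (fun _ => a) l) = INR (length l) * a.
Proof. induction l; simpl length; [simpl; ring|]. rewrite S_INR. simpl. rewrite IHl. ring. Qed.

Lemma sumR_nonneg {A} (f : A -> R) l : (forall a, 0 <= f a) -> 0 <= sumR (map f l).
Proof. intros H; induction l; simpl; [lra|]. specialize (H a). lra. Qed.

Lemma seqs_last E T (h : list edge -> R) :
  sumR (map h (seqs E (S T))) =
  sumR (map (fun s => sumR (map (fun e => h (s ++ [e])) E)) (seqs E T)).
Proof.
  revert h. induction T; intros h.
  - simpl. rewrite sumR_flat_map. simpl. rewrite Rplus_0_r. apply sumR_ext_in. intros. ring.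
  - change (seqs E (S (S T))) with (flat_map (fun e => map (cons e) (seqs E (S T))) E).
    change (seqs E (S T)) with (flat_map (fun e => map (cons e) (seqs E T)) E) at 2.
    rewrite !sumR_flat_map. apply sumR_ext_in. intros e _.
    rewrite !map_map. rewrite (IHT (fun s => h (e :: s))). reflexivity.
Qed.

Lemma seqs_length E T s : In s (seqs E T) -> length s = T.
Proof.
  revert s; induction T; intros s H; simpl in H.
  - destruct H as [<-|[]]; auto.
  - apply in_flat_map in H. destruct H as [e [_ H]]. apply in_map_iff in H.
    destruct H as [s' [<- H]]. simpl. rewrite (IHT s' H). auto.
Qed.

Lemma length_seqs E T : length (seqs E T) = (length E ^ T)%nat.
Proof.
  induction T; auto.
  change (length (flat_map (fun e => map (cons e) (seqs E T)) E) = (length E * length E ^ T)%nat).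
  rewrite <- IHT. clear IHT. generalize (seqs E T) as L. intros L.
  induction E as [|e E' IHE]; simpl; auto.
  rewrite length_app, length_map, IHE. auto.
Qed.

Lemma run_app lam t x s e :
  run lam t x (s ++ [e]) = step (lam (t + length s)%nat) (run lam t x s) e.
Proof.
  revert t x; induction s; intros t x; simpl.
  - rewrite Nat.add_0_r. auto.
  - rewrite IHs. replace (S t + length s)%nat with (t + S (length s))%nat by lia. auto.
Qed.

Definition Phi (n : nat) (M : R) (x : vec) : R :=
  / 2 * sumR (map (fun v => (x v - M) ^ 2) (seq 0 n)).

Lemma sum_delta i a len s :
  sumR (map (fun v => if Nat.eqb v i then a else 0) (seq s len)) =
  if andb (Nat.leb s i) (Nat.ltb i (s + len)) then a else 0.
Proof.
  revert s; induction len; intros s; simpl.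
  - destruct (Nat.leb_spec s i); destruct (Nat.ltb_spec i (s+0)); simpl; try lia; auto.
  - rewrite IHlen.
    destruct (Nat.eqb_spec s i); destruct (Nat.leb_spec s i); destruct (Nat.ltb_spec i (s + S len));
    destruct (Nat.leb_spec (S s) i); destruct (Nat.ltb_spec i (S s + len)); simpl; try lia; ring.
Qed.

Lemma sum_delta0 n i a : (i < n)%nat ->
  sumR (map (fun v => if Nat.eqb v i then a else 0) (seq 0 n)) = a.
Proof.
  intros H. rewrite sum_delta. destruct (Nat.leb_spec 0 i); destruct (Nat.ltb_spec i (0+n)); simpl; auto; lia.
Qed.

Lemma Phi_step n M lam x i j : (i < n)%nat -> (j < n)%nat -> i <> j ->
  Phi n M (step lam x (i, j)) = Phi n M x - lam * Rabs (x i - x j) + lam ^ 2.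
Proof.
  intros Hi Hj Hij. unfold Phi.
  set (ni := if Rlt_dec (x i) (x j) then x i + lam else x i - lam).
  set (nj := if Rlt_dec (x i) (x j) then x j - lam else x j + lam).
  rewrite (sumR_ext_in _ (fun v => ((x v - M)^2 + (if Nat.eqb v i then (ni - M)^2 - (x i - M)^2 else 0))
     + (if Nat.eqb v j then (nj - M)^2 - (x j - M)^2 else 0))).
  2:{ intros v _. unfold step. fold ni nj.
      destruct (Nat.eqb_spec v i); destruct (Nat.eqb_spec v j); subst; try lia. all: ring. }
  rewrite !sumR_plus, !sum_delta0 by auto.
  generalize (sumR (map (fun v : nat => (x v - M) ^ 2) (seq 0 n))). intros SS.
  unfold ni, nj. destruct (Rlt_dec (x i) (x j)).
  - rewrite Rabs_left by lra. lra.
  - rewrite Rabs_right by lra. lra.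
Qed.
Lemma avg_step E n M lam x : simple_graph n E -> E <> nil ->
  sumR (map (fun e => Phi n M (step lam x e)) E) =
  INR (length E) * (Phi n M x - lam * Lfun E x + lam ^ 2).
Proof.
  intros [_ [HG _]] HE.
  rewrite (sumR_ext_in _ (fun e => (Phi n M x + lam ^ 2) + (- lam) * Rabs (x (fst e) - x (snd e)))).
  2:{ intros [i j] Hin. destruct (HG i j Hin) as [Hi [Hj Hij]].
      rewrite Phi_step by auto. simpl. ring. }
  rewrite sumR_plus, sumR_const, sumR_scal.
  assert (0 < INR (length E)).
  { destruct E as [|e0 E0]; [congruence|]. simpl length. rewrite S_INR. pose proof (pos_INR (length E0)). lra. }
  unfold Lfun, edge in *. field. lra.
Qed.

Definition EF (E : list edge) (lam : nat -> R) (c : vec) (F : vec -> R) (t : nat) : R :=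
  (/ INR (length E)) ^ t * sumR (map (fun s => F (iterate lam c s)) (seqs E t)).

Lemma EPhi_step E n M lam c t : simple_graph n E -> E <> nil ->
  EF E lam c (Phi n M) (S t) = EF E lam c (Phi n M) t - lam t * ExpL E lam c t + lam t ^ 2.
Proof.
  intros HG HE.
  assert (Hm : 0 < INR (length E)).
  { destruct E as [|e0 E0]; [congruence|]. simpl length. rewrite S_INR. pose proof (pos_INR (length E0)). lra. }
  unfold EF, ExpL. rewrite seqs_last.
  rewrite (sumR_ext_in _ (fun s => INR (length E) * (Phi n M (iterate lam c s) + (- lam t) * Lfun E (iterate lam c s) + lam t ^ 2))).
  2:{ intros s Hs. unfold iterate. rewrite (sumR_ext_in _ (fun e => Phi n M (step (lam t) (run lam 0 c s) e))).
      - rewrite avg_step by auto. ring.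
      - intros e _. rewrite run_app. simpl. rewrite (seqs_length _ _ _ Hs). auto. }
  rewrite sumR_scal, !sumR_plus, sumR_scal, sumR_const, length_seqs, pow_INR.
  simpl pow.
  assert (Hp : (/ INR (length E)) ^ t * INR (length E) ^ t = 1).
  { rewrite <- Rpow_mult_distr, Rinv_l by lra. apply pow1. }
  assert (Hq : 0 < (/ INR (length E)) ^ t) by (apply pow_lt; apply Rinv_0_lt_compat; lra).
  set (A := (/ INR (length E)) ^ t) in *. set (B := INR (length E) ^ t) in *.
  set (m := INR (length E)) in *.
  set (P := sumR (map (fun a : list edge => Phi n M (iterate lam c a)) (seqs E t))).
  set (L := sumR (map (fun a : list edge => Lfun E (iterate lam c a)) (seqs E t))).
  transitivity (A * P - lam t * (A * L) + (A * B) * (lam t * (lam t * 1))).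
  { field. lra. }
  rewrite Hp. ring.
Qed.

Lemma Phi_nonneg n M x : 0 <= Phi n M x.
Proof. unfold Phi. apply Rmult_le_pos; [lra|]. apply sumR_nonneg. intros; apply pow2_ge_0. Qed.

Lemma EF_nonneg E lam c n M t : 0 <= EF E lam c (Phi n M) t.
Proof.
  unfold EF. apply Rmult_le_pos.
  - apply pow_le. destruct (length E). simpl. rewrite Rinv_0. lra. left. apply Rinv_0_lt_compat. apply lt_0_INR. lia.
  - apply sumR_nonneg. intros; apply Phi_nonneg.
Qed.

Lemma telescope E n lam c k : simple_graph n E -> E <> nil ->
  EF E lam c (Phi n (mean n c)) (S k) =
  Rzero n c - sum_f_R0 (fun t => lam t * ExpL E lam c t) k + beta lam k.
Proof.
  intros HG HE. unfold beta. induction k.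
  - rewrite EPhi_step by auto. simpl. unfold EF. simpl. unfold iterate. simpl. unfold Rzero, Phi. ring.
  - rewrite EPhi_step by auto. rewrite IHk. simpl. ring.
Qed.

Lemma weighted_bound E n lam c k : simple_graph n E -> E <> nil ->
  sum_f_R0 (fun t => lam t * ExpL E lam c t) k <= Rzero n c + beta lam k.
Proof.
  intros HG HE. pose proof (telescope E n lam c k HG HE). pose proof (EF_nonneg E lam c n (mean n c) (S k)). lra.
Qed.

Lemma min_upto_le f k : min_upto f k <= f k /\ forall t, (t <= k)%nat -> min_upto f k <= f t.
Proof.
  induction k; simpl.
  - split; [lra|]. intros t Ht. assert (t = 0%nat) by lia. subst. lra.
  - destruct IHk as [_ IH]. split. apply Rmin_r. intros t Ht.
    destruct (Nat.eq_dec t (S k)). subst. apply Rmin_r.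
    eapply Rle_trans. apply Rmin_l. apply IH. lia.
Qed.

Lemma sum_nonneg w k : (forall t, (t <= k)%nat -> 0 <= w t) -> 0 <= sum_f_R0 w k.
Proof.
  induction k; intros H; simpl. apply H; lia.
  assert (0 <= sum_f_R0 w k) by (apply IHk; intros; apply H; lia). specialize (H (S k) ltac:(lia)). lra.
Qed.

Lemma min_weighted f w k : (forall t, (t <= k)%nat -> 0 <= w t) ->
  min_upto f k * sum_f_R0 w k <= sum_f_R0 (fun t => w t * f t) k.
Proof.
  intros Hw. induction k; simpl. lra.
  assert (IH : min_upto f k * sum_f_R0 w k <= sum_f_R0 (fun t => w t * f t) k)
    by (apply IHk; intros; apply Hw; lia).
  assert (Hs : 0 <= sum_f_R0 w k) by (apply sum_nonneg; intros; apply Hw; lia).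
  assert (H1 : Rmin (min_upto f k) (f (S k)) <= min_upto f k) by apply Rmin_l.
  assert (H2 : Rmin (min_upto f k) (f (S k)) <= f (S k)) by apply Rmin_r.
  assert (Hw1 := Hw (S k) ltac:(lia)).
  assert (Rmin (min_upto f k) (f (S k)) * sum_f_R0 w k <= min_upto f k * sum_f_R0 w k)
    by (apply Rmult_le_compat_r; auto).
  assert (Rmin (min_upto f k) (f (S k)) * w (S k) <= f (S k) * w (S k))
    by (apply Rmult_le_compat_r; auto).
  nra.
Qed.

Lemma sum_scal c h k : sum_f_R0 (fun t => c * h t) k = c * sum_f_R0 h k.
Proof. induction k; simpl. auto. rewrite IHk. ring. Qed.

Lemma alpha_pos lam k : (forall t, (t <= k)%nat -> 0 < lam t) -> 0 < alpha lam k.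
Proof.
  unfold alpha. induction k; intros H; simpl. apply H; lia.
  assert (0 < sum_f_R0 lam k) by (apply IHk; intros; apply H; lia). specialize (H (S k) ltac:(lia)). lra.
Qed.

Lemma cs_sum mu k : sum_f_R0 mu k ^ 2 <= INR (S k) * sum_f_R0 (fun t => mu t ^ 2) k.
Proof.
  induction k. simpl. lra.
  change (sum_f_R0 (fun t => mu t ^ 2) (S k)) with (sum_f_R0 (fun t => mu t ^ 2) k + mu (S k) ^ 2).
  change (sum_f_R0 mu (S k)) with (sum_f_R0 mu k + mu (S k)). rewrite (S_INR (S k)).
  set (S0 := sum_f_R0 mu k) in *. set (Q := sum_f_R0 (fun t => mu t ^ 2) k) in *.
  set (x := mu (S k)).
  assert (HN : 1 <= INR (S k)) by (apply (le_INR 1); lia).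
  set (N := INR (S k)) in *.
  clearbody S0 Q x N.
  assert (Hq : 0 <= Q + N * x ^ 2 - 2 * S0 * x).
  { assert (N * (Q + N * x ^ 2 - 2 * S0 * x) >= (S0 - N * x) ^ 2) by nra.
    assert (0 <= (S0 - N * x) ^ 2) by apply pow2_ge_0.
    apply (Rmult_le_reg_l N); [lra|]. rewrite Rmult_0_r. lra. }
  nra.
Qed.

Lemma sqrt_term y : 0 <= y -> 2 * (sqrt (y + 2) - sqrt (y + 1)) <= / sqrt (y + 1).
Proof.
  intros Hy.
  assert (Hu : 0 < sqrt (y + 1)) by (apply sqrt_lt_R0; lra).
  assert (Hu2 := sqrt_sqrt (y + 1) ltac:(lra)).
  assert (Hv2 := sqrt_sqrt (y + 2) ltac:(lra)).
  assert (Hv : 0 <= sqrt (y + 2)) by apply sqrt_pos.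
  set (u := sqrt (y + 1)) in *. set (v := sqrt (y + 2)) in *.
  apply (Rmult_le_reg_r u); auto. rewrite Rinv_l by lra.
  nra.
Qed.

Lemma sqrt_sum k : 2 * (sqrt (INR k + 2) - 1) <= sum_f_R0 (fun t => / sqrt (INR t + 1)) k.
Proof.
  induction k.
  - simpl sum_f_R0. simpl INR. pose proof (sqrt_term 0 ltac:(lra)).
    replace (0 + 2) with 2 in * by ring. replace (0 + 1) with 1 in * by ring. rewrite sqrt_1 in *. lra.
  - change (sum_f_R0 (fun t => / sqrt (INR t + 1)) (S k)) with (sum_f_R0 (fun t => / sqrt (INR t + 1)) k + / sqrt (INR (S k) + 1)).
    pose proof (sqrt_term (INR k + 1) ltac:(pose proof (pos_INR k); lra)).
    rewrite S_INR.
    replace (INR k + 1 + 1) with (INR k + 2) in * by ring.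
    replace (INR k + 1 + 2) with (INR k + 1 + 2) by ring.
    replace (INR k + 1 + 2) with (INR k + 3) in * by ring. lra.
Qed.

Lemma ln_lower q : 1 <= q -> 2*(q-1)/(q+1) <= ln q.
Proof.
intros Hq. destruct (Req_dec q 1) as [->|Hne].
{ rewrite ln_1. unfold Rdiv. lra. }
assert (Hq1 : 1 < q) by lra.
set (f := fun z => ln z - 2*(z-1)/(z+1)).
destruct (MVT_cor2 f (fun z => /z - 4/(z+1)^2) 1 q Hq1) as [cc [Heq Hc]].
{ intros z Hz. unfold f.
  assert (D0 := derivable_pt_lim_minus id (fct_cte 1) z 1 0 (derivable_pt_lim_id z) (derivable_pt_lim_const 1 z)).
  assert (D1 := derivable_pt_lim_scal _ 2 z _ D0).
  assert (D2 := derivable_pt_lim_plus id (fct_cte 1) z 1 0 (derivable_pt_lim_id z) (derivable_pt_lim_const 1 z)).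
  assert (D3 := derivable_pt_lim_div _ _ z _ _ D1 D2 ltac:(unfold plus_fct, id, fct_cte; lra)).
  assert (D4 := derivable_pt_lim_ln z ltac:(lra)).
  assert (D5 := derivable_pt_lim_minus _ _ z _ _ D4 D3).
  unfold minus_fct, div_fct, mult_real_fct, plus_fct, id, fct_cte in D5.
  replace (/ z - 4 / (z + 1) ^ 2) with (/ z - (2 * (1 - 0) * (z + 1) - (1 + 0) * (2 * (z - 1))) / (z + 1)²).
  exact D5. unfold Rsqr. field. lra. }
unfold f in Heq. rewrite ln_1 in Heq.
assert (0 <= / cc - 4 / (cc + 1) ^ 2).
{ replace (/ cc - 4 / (cc + 1) ^ 2) with ((cc-1)^2 / (cc * (cc+1)^2)) by (field; lra).
  apply Rmult_le_pos. nra. left. apply Rinv_0_lt_compat. nra. }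
assert (0 <= (/ cc - 4 / (cc + 1) ^ 2) * (q - 1)) by nra.
assert (E: 2*(1-1)/(1+1) = 0) by field. rewrite E in Heq. lra.
Qed.

Lemma ln_term y : 0 <= y -> / (y + 1) <= ln (y + 3/2) - ln (y + 1/2).
Proof.
  intros Hy.
  assert (Hq : 1 <= (y + 3/2) / (y + 1/2)).
  { apply (Rmult_le_reg_r (y + 1/2)). lra. unfold Rdiv. rewrite Rmult_assoc, Rinv_l by lra. lra. }
  pose proof (ln_lower _ Hq).
  assert (Hl : ln ((y + 3/2) / (y + 1/2)) = ln (y + 3/2) - ln (y + 1/2)).
  { unfold Rdiv at 1. rewrite ln_mult, ln_Rinv; try lra. apply Rinv_0_lt_compat; lra. }
  rewrite Hl in H.
  replace (/ (y + 1)) with (2 * ((y + 3 / 2) / (y + 1 / 2) - 1) / ((y + 3 / 2) / (y + 1 / 2) + 1)).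
  lra. field. lra.
Qed.

Lemma harm_sum k : sum_f_R0 (fun t => / (INR t + 1)) k <= ln (INR k + 3/2) + ln 2.
Proof.
  induction k.
  - simpl sum_f_R0. simpl INR. pose proof (ln_term 0 ltac:(lra)).
    replace (0 + 1 / 2) with (/ 2) in H by field. rewrite ln_Rinv in H by lra. lra.
  - change (sum_f_R0 (fun t => / (INR t + 1)) (S k)) with (sum_f_R0 (fun t => / (INR t + 1)) k + / (INR (S k) + 1)).
    pose proof (ln_term (INR k + 1) ltac:(pose proof (pos_INR k); lra)).
    rewrite S_INR.
    replace (INR k + 1 + 1 / 2) with (INR k + 3 / 2) in H by field. lra.
Qed.

Lemma alpha_const lam k x : (forall t, (t <= k)%nat -> lam t = x) -> alpha lam k = x * INR (S k).
Proof. intros H. unfold alpha. rewrite (sum_eq _ (fun _ => x)) by auto. apply sum_cte. Qed.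

Lemma beta_const lam k x : (forall t, (t <= k)%nat -> lam t = x) -> beta lam k = x ^ 2 * INR (S k).
Proof. intros H. unfold beta. rewrite (sum_eq _ (fun _ => x ^ 2)) by (intros; rewrite H; auto). apply sum_cte. Qed.

Lemma Rzero_nonneg n c : 0 <= Rzero n c.
Proof. apply (Phi_nonneg n (mean n c) c). Qed.

Theorem mainTheorem18
  (n : nat) (E : list edge) (c : vec) (lam : nat -> R)
  (HG : simple_graph n E) (Hconn : connected n E) (HE : E <> nil)
  (Hpos : forall t, 0 < lam t) :
  (forall k : nat, (1 <= k)%nat ->
     min_upto (ExpL E lam c) k
       <= sum_f_R0 (fun t => lam t / alpha lam k * ExpL E lam c t) k /\
     sum_f_R0 (fun t => lam t / alpha lam k * ExpL E lam c t) k
       <= Ubound (Rzero n c) lam k) /\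
  (* (i) constant stepsizes *)
  ((forall t, lam t = lam 0%nat) ->
     forall k : nat, (1 <= k)%nat ->
       Ubound (Rzero n c) lam k = Rzero n c / (lam 0%nat * INR (k + 1)) + lam 0%nat) /\
  (* (ii) optimal constant stepsize for fixed k *)
  (forall (k : nat) (Rb : R), (1 <= k)%nat -> 0 < Rb ->
     (forall mu : nat -> R, (forall t, (t <= k)%nat -> 0 < mu t) ->
        (Rb + beta (fun _ => sqrt (Rb / INR (k + 1))) k)
          / alpha (fun _ => sqrt (Rb / INR (k + 1))) k
        <= (Rb + beta mu k) / alpha mu k) /\
     (Rb + beta (fun _ => sqrt (Rb / INR (k + 1))) k)
       / alpha (fun _ => sqrt (Rb / INR (k + 1))) k
       = 2 * sqrt (Rb / INR (k + 1)) /\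
     (Rzero n c <= Rb ->
        (forall t, (t <= k)%nat -> lam t = sqrt (Rb / INR (k + 1))) ->
        Ubound (Rzero n c) lam k <= 2 * sqrt (Rb / INR (k + 1)))) /\
  (* (iii) stepsizes a / sqrt(t+1) *)
  (forall a : R, 0 < a -> (forall t, lam t = a / sqrt (INR t + 1)) ->
     forall k : nat, (1 <= k)%nat ->
       Ubound (Rzero n c) lam k
         <= (Rzero n c + a ^ 2 * (ln (INR k + 3 / 2) + ln 2))
            / (2 * a * (sqrt (INR k + 2) - 1))).
Proof.
  assert (HR0 := Rzero_nonneg n c).
  assert (Hconst : forall k Rb, 0 < Rb ->
     (Rb + beta (fun _ => sqrt (Rb / INR (k + 1))) k)
       / alpha (fun _ => sqrt (Rb / INR (k + 1))) k
       = 2 * sqrt (Rb / INR (k + 1))).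
  { intros k Rb HRb.
    rewrite (alpha_const _ k (sqrt (Rb / INR (k + 1)))) by auto.
    rewrite (beta_const _ k (sqrt (Rb / INR (k + 1)))) by auto.
    rewrite Nat.add_1_r.
    assert (HN : 0 < INR (S k)) by (apply lt_0_INR; lia).
    assert (Hs : 0 < sqrt (Rb / INR (S k))) by (apply sqrt_lt_R0; apply Rdiv_lt_0_compat; lra).
    assert (Hs2 := sqrt_sqrt (Rb / INR (S k)) ltac:(left; apply Rdiv_lt_0_compat; lra)).
    set (s := sqrt (Rb / INR (S k))) in *. clearbody s.
    assert (HRb' : Rb = s * s * INR (S k)) by (rewrite Hs2; field; lra).
    rewrite HRb'. field. lra. }
  split; [|split; [|split]].
  - intros k Hk.
    assert (Ha : 0 < alpha lam k) by (apply alpha_pos; auto).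
    split.
    + assert (Hw : forall t, (t <= k)%nat -> 0 <= lam t / alpha lam k)
        by (intros; left; apply Rdiv_lt_0_compat; auto).
      pose proof (min_weighted (ExpL E lam c) (fun t => lam t / alpha lam k) k Hw).
      assert (Hs1 : sum_f_R0 (fun t => lam t / alpha lam k) k = 1).
      { unfold Rdiv. rewrite (sum_eq _ (fun t => / alpha lam k * lam t)) by (intros; ring).
        rewrite sum_scal. fold (alpha lam k). field. lra. }
      rewrite Hs1, Rmult_1_r in H. exact H.
    + rewrite (sum_eq _ (fun t => / alpha lam k * (lam t * ExpL E lam c t))) by (intros; unfold Rdiv; ring).
      rewrite sum_scal. pose proof (weighted_bound E n lam c k HG HE).
      unfold Ubound. apply (Rmult_le_reg_l (alpha lam k)); auto.
      field_simplify; try lra.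
  - intros Hc k Hk.
    assert (Hl0 := Hpos 0%nat).
    unfold Ubound. rewrite (alpha_const lam k (lam 0%nat)) by auto.
    rewrite (beta_const lam k (lam 0%nat)) by auto.
    rewrite Nat.add_1_r.
    assert (HN : 0 < INR (S k)) by (apply lt_0_INR; lia).
    field. lra.
  - intros k Rb Hk HRb. split; [|split].
    + intros mu Hmu. rewrite Hconst by auto.
      assert (HA : 0 < alpha mu k) by (apply alpha_pos; auto).
      pose proof (cs_sum mu k) as Hcs. fold (alpha mu k) in Hcs.
      change (sum_f_R0 (fun t => mu t ^ 2) k) with (beta mu k) in Hcs.
      rewrite Nat.add_1_r.
      assert (HN : 0 < INR (S k)) by (apply lt_0_INR; lia).
      assert (Hs2 := sqrt_sqrt (Rb / INR (S k)) ltac:(left; apply Rdiv_lt_0_compat; lra)).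
      set (s := sqrt (Rb / INR (S k))) in *. clearbody s.
      assert (HRb' : Rb = s * s * INR (S k)) by (rewrite Hs2; field; lra).
      set (A := alpha mu k) in *. set (B := beta mu k) in *. set (N := INR (S k)) in *.
      clearbody A B N.
      apply (Rmult_le_reg_r A); auto. replace ((Rb + B) / A * A) with (Rb + B) by (field; lra).
      assert (HH : N * (Rb + B - 2 * s * A) >= (N * s - A) ^ 2) by (rewrite HRb'; nra).
      assert (0 <= (N * s - A) ^ 2) by apply pow2_ge_0.
      assert (0 <= Rb + B - 2 * s * A).
      { apply (Rmult_le_reg_l N); [lra|]. rewrite Rmult_0_r. lra. }
      lra.
    + apply Hconst; auto.
    + intros HR0b Hlam.
      assert (Ha : alpha lam k = alpha (fun _ => sqrt (Rb / INR (k + 1))) k)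
        by (unfold alpha; apply sum_eq; auto).
      assert (Hb : beta lam k = beta (fun _ => sqrt (Rb / INR (k + 1))) k)
        by (unfold beta; apply sum_eq; intros; rewrite Hlam; auto).
      rewrite <- (Hconst k Rb HRb). unfold Ubound. rewrite Ha, Hb.
      assert (HA : 0 < alpha (fun _ => sqrt (Rb / INR (k + 1))) k).
      { rewrite <- Ha. apply alpha_pos; auto. }
      unfold Rdiv. rewrite <- Rmult_plus_distr_r.
      apply Rmult_le_compat_r. left; apply Rinv_0_lt_compat; auto. lra.
  - intros a Ha Hlam k Hk.
    assert (HA : 0 < alpha lam k) by (apply alpha_pos; auto).
    assert (Halpha : 2 * a * (sqrt (INR k + 2) - 1) <= alpha lam k).
    { unfold alpha. rewrite (sum_eq _ (fun t => a * / sqrt (INR t + 1))) by (intros; rewrite Hlam; auto).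
      rewrite sum_scal. pose proof (sqrt_sum k). nra. }
    assert (Hbeta : beta lam k <= a ^ 2 * (ln (INR k + 3 / 2) + ln 2)).
    { unfold beta. rewrite (sum_eq _ (fun t => a ^ 2 * / (INR t + 1))).
      - rewrite sum_scal. pose proof (harm_sum k). apply Rmult_le_compat_l; auto. apply pow2_ge_0.
      - intros t _. rewrite Hlam. pose proof (pos_INR t).
        assert (Hq := sqrt_sqrt (INR t + 1) ltac:(lra)).
        assert (0 < sqrt (INR t + 1)) by (apply sqrt_lt_R0; lra).
        unfold Rdiv. rewrite Rpow_mult_distr, pow_inv.
        replace (sqrt (INR t + 1) ^ 2) with (INR t + 1) by (rewrite <- Hq at 1; ring). ring. }
    assert (HD : 0 < 2 * a * (sqrt (INR k + 2) - 1)).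
    { assert (1 < sqrt (INR k + 2)).
      { rewrite <- sqrt_1. apply sqrt_lt_1; pose proof (pos_INR k); lra. }
      nra. }
    assert (Hb0 : 0 <= beta lam k) by (unfold beta; apply sum_nonneg; intros; apply pow2_ge_0).
    unfold Ubound. unfold Rdiv. rewrite <- Rmult_plus_distr_r.
    apply Rle_trans with ((Rzero n c + beta lam k) * / (2 * a * (sqrt (INR k + 2) - 1))).
    + apply Rmult_le_compat_l. lra. apply Rinv_le_contravar; auto.
    + apply Rmult_le_compat_r. left; apply Rinv_0_lt_compat; auto. lra.
Qed.
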